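(* Let $z>0$ and $\mu\in\left(-\frac{5}{2},-\frac{1}{2}\right)$ with $\mu\neq-\frac{3}{2}$. Then $$\left[s_{\mu,\frac{1}{2}}(z)\right]^2-s_{\mu-1,\frac{1}{2}}(z)\,s_{\mu+1,\frac{1}{2}}(z)>\frac{1}{\frac{1}{2}-\mu}\left[s_{\mu,\frac{1}{2}}(z)\right]^2,$$ where $s_{\mu,\nu}$ denotes the Lommel function of the first kind.
   Context: The Lommel function of the first kind $s_{\mu,\nu}$ is the particular solution of the inhomogeneous Bessel equation $z^2y''+zy'+(z^2-\nu^2)y=z^{\mu+1}$ given by $$s_{\mu,\nu}(z)=\frac{z^{\mu+1}}{(\mu-\nu+1)(\mu+\nu+1)}\,{}_{1}F_{2}\left(1;\frac{\mu-\nu+3}{2},\frac{\mu+\nu+3}{2};-\frac{z^2}{4}\right),$$ where ${}_1F_2(a;b_1,b_2;x)=\sum_{n\ge0}\frac{(a)_n}{(b_1)_n(b_2)_n}\frac{x^n}{n!}$ and $(a)_n$ is the Pochhammer symbol; it is undefined when either of $\mu\pm\nu$ is an odd negative integer. For $z>0$, $z^{\mu+1}$ denotes the positive real power. *)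

(* Defs.v *)
From Stdlib Require Import Reals.
From Coquelicot Require Import Coquelicot.
Open Scope R_scope.

Fixpoint poch (a : R) (n : nat) : R :=
  match n with
  | O => 1
  | S m => poch a m * (a + INR m)
  end.

Definition hyp1F2 (a b1 b2 x : R) : R :=
  Series (fun n => poch a n / (poch b1 n * poch b2 n) * x ^ n / INR (Factorial.fact n)).

(* Lommel function of the first kind, for z > 0 (z^(mu+1) = Rpower). *)
Definition lommel_s (mu nu z : R) : R :=
  Rpower z (mu + 1) / ((mu - nu + 1) * (mu + nu + 1))
  * hyp1F2 1 ((mu - nu + 3) / 2) ((mu + nu + 3) / 2) (- (z ^ 2) / 4).

(* Main.v *)
Require Import Defs.
From Stdlib Require Import Reals Lra Lia.
From Coquelicot Require Import Coquelicot.
Open Scope R_scope.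

Lemma poch_S_l (a : R) (n : nat) : poch a (S n) = a * poch (a + 1) n.
Proof.
  induction n as [|n IH].
  - simpl. ring.
  - change (poch a (S (S n))) with (poch a (S n) * (a + INR (S n))).
    rewrite IH. simpl poch. rewrite S_INR. ring.
Qed.

Lemma poch_pos (a : R) (n : nat) : 0 < a -> 0 < poch a n.
Proof.
  intros Ha; induction n as [|n IH]; simpl; [lra|].
  apply Rmult_lt_0_compat; auto. pose proof (pos_INR n); lra.
Qed.

Lemma poch_nz (c : R) (n : nat) : -1 < c -> c <> 0 -> poch c n <> 0.
Proof.
  intros H1 H2; induction n as [|n IH]; simpl; [lra|].
  apply Rmult_integral_contrapositive_currified; auto.
  destruct n. simpl. lra. rewrite S_INR. pose proof (pos_INR n); lra.
Qed.

Lemma poch_2S (c : R) (n : nat) :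
  poch c (2 * S n) = poch c (2 * n) * (c + 2 * INR n) * (c + 2 * INR n + 1).
Proof.
  replace (2 * S n)%nat with (S (S (2 * n))) by lia.
  change (poch c (S (S (2*n)))) with (poch c (2*n) * (c + INR (2*n)) * (c + INR (S (2*n)))).
  rewrite S_INR, mult_INR. simpl (INR 2). ring.
Qed.

Lemma poch_2p1 (c : R) (n : nat) :
  poch c (2 * n + 1) = poch c (2 * n) * (c + 2 * INR n).
Proof.
  replace (2 * n + 1)%nat with (S (2 * n)) by lia.
  change (poch c (S (2*n))) with (poch c (2*n) * (c + INR (2*n))).
  rewrite mult_INR. simpl (INR 2). ring.
Qed.

Lemma poch_half (c : R) (n : nat) :
  poch (c/2) n * poch ((c+1)/2) n * 4 ^ n = poch c (2 * n).
Proof.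
  induction n as [|n IH]; [simpl; ring|].
  rewrite poch_2S, <- IH. simpl poch. simpl pow. field.
Qed.

Lemma poch_one (n : nat) : poch 1 n = INR (Factorial.fact n).
Proof.
  induction n as [|n IH]; [simpl; ring|].
  simpl poch. rewrite IH. rewrite Rfunctions.fact_simpl, mult_INR, S_INR. ring.
Qed.

Lemma lim_lin (c : R) : is_lim_seq (fun n => c + 2 * INR n) p_infty.
Proof.
  apply is_lim_seq_ext with (fun n => (c + INR n) + INR n); [intros; ring|].
  apply is_lim_seq_plus with p_infty p_infty; [| apply is_lim_seq_INR | reflexivity].
  apply is_lim_seq_plus with c p_infty; [apply is_lim_seq_const | apply is_lim_seq_INR | reflexivity].
Qed.

Lemma lim_inv_quad (c d : R) :
  is_lim_seq (fun n => / Rabs ((c + 2 * INR n) * (d + 2 * INR n))) 0.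
Proof.
  replace (Finite 0) with (Rbar_inv p_infty) by reflexivity.
  apply is_lim_seq_inv; [|discriminate].
  replace p_infty with (Rbar_abs p_infty) by reflexivity.
  apply is_lim_seq_abs.
  apply is_lim_seq_mult with p_infty p_infty; [apply lim_lin | apply lim_lin | reflexivity].
Qed.

Definition al (c : R) (n : nat) : R := (-1) ^ n / poch c (2 * n).
Definition be (c : R) (n : nat) : R := (-1) ^ n / poch c (2 * n + 1).

Lemma pow_m1_nz (n : nat) : (-1) ^ n <> 0.
Proof. apply pow_nonzero; lra. Qed.

Lemma CV_al (c : R) : -1 < c -> c <> 0 -> CV_radius (al c) = p_infty.
Proof.
  intros H1 H2.
  assert (Hp : forall n, poch c n <> 0) by (intros; apply poch_nz; auto).
  apply CV_radius_infinite_DAlembert.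
  - intros n. unfold al. apply Rmult_integral_contrapositive_currified;
      [apply pow_m1_nz | apply Rinv_neq_0_compat; auto].
  - apply is_lim_seq_ext with (fun n => / Rabs ((c + 2 * INR n) * (c + 1 + 2 * INR n))).
    + intros n. rewrite <- Rabs_inv, <- Rabs_Ropp. f_equal.
      unfold al. rewrite poch_2S.
      assert (Hq : poch c (2 * n) <> 0) by auto.
      assert (Hr : (c + 2 * INR n) * (c + 2 * INR n + 1) <> 0).
      { pose proof (poch_2S c n) as E. intro Z. apply (Hp (2 * S n)%nat). rewrite E.
        rewrite Rmult_assoc, Z. ring. }
      simpl pow.
      pose proof (pow_m1_nz n). field.
      repeat split; auto; intro Z; apply Hr; rewrite Z; ring.
    + apply lim_inv_quad.
Qed.

Lemma CV_be (c : R) : 0 < c -> CV_radius (be c) = p_infty.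
Proof.
  intros H1.
  assert (Hp : forall n, 0 < poch c n) by (intros; apply poch_pos; auto).
  apply CV_radius_infinite_DAlembert.
  - intros n. unfold be. apply Rmult_integral_contrapositive_currified;
      [apply pow_m1_nz | apply Rinv_neq_0_compat; specialize (Hp (2*n+1)%nat); lra].
  - apply is_lim_seq_ext with (fun n => / Rabs ((c + 1 + 2 * INR n) * (c + 2 + 2 * INR n))).
    + intros n. rewrite <- Rabs_inv, <- Rabs_Ropp. f_equal. unfold be.
      replace (2 * S n + 1)%nat with (S (S (2 * n + 1))) by lia.
      change (poch c (S (S (2*n+1)))) with
        (poch c (2*n+1) * (c + INR (2*n+1)) * (c + INR (S (2*n+1)))).
      rewrite S_INR, plus_INR, mult_INR. simpl (INR 2). simpl (INR 1).
      specialize (Hp (2*n+1)%nat). pose proof (pos_INR n).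
      simpl pow.
      pose proof (pow_m1_nz n). field. repeat split; lra.
    + apply lim_inv_quad.
Qed.

Lemma hyp_al (c z : R) : -1 < c -> c <> 0 ->
  hyp1F2 1 (c/2) ((c+1)/2) (-(z^2)/4) = PSeries (al c) (z^2).
Proof.
  intros H1 H2. unfold hyp1F2, PSeries. apply Series_ext. intro n.
  match goal with |- _ = ?r => replace r with (al c n * (z^2)^n) end.
  2:{ reflexivity. }
  unfold al. rewrite poch_one, <- poch_half.
  assert (Hp : poch c (2 * n) <> 0) by (apply poch_nz; auto).
  rewrite <- poch_half in Hp.
  assert (Hf : INR (Factorial.fact n) <> 0) by (apply INR_fact_neq_0).
  replace (-(z^2)/4) with ((-1) * (z^2) * / 4) by field.
  rewrite !Rpow_mult_distr, pow_inv.
  assert (H4 : 4 ^ n <> 0) by (apply pow_nonzero; lra).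
  field. repeat split; auto; intro Z; apply Hp; rewrite Z; ring.
Qed.

Lemma scal_R (x y : R) : scal x y = x * y.
Proof. reflexivity. Qed.

Lemma A_plus1 (a w : R) : 0 < a -> PSeries (al (a+1)) w = a * PSeries (be a) w.
Proof.
  intros Ha. rewrite <- PSeries_scal. apply PSeries_ext. intro n.
  unfold PS_scal, al, be. rewrite scal_R.
  replace (2 * n + 1)%nat with (S (2 * n)) by lia.
  rewrite poch_S_l.
  assert (0 < poch (a+1) (2*n)) by (apply poch_pos; lra).
  field. lra.
Qed.

Lemma A_minus1 (a w : R) : 0 < a < 2 -> a <> 1 ->
  PSeries (al (a-1)) w = 1 - w * PSeries (be a) w / (a-1).
Proof.
  intros Ha Ha1.
  rewrite PSeries_decr_1.
  2:{ apply CV_radius_inside. rewrite CV_al by lra. exact I. }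
  replace (al (a-1) 0) with 1 by (unfold al; simpl; field).
  replace (PSeries (PS_decr_1 (al (a - 1))) w) with (PSeries (PS_scal (- / (a-1)) (be a)) w).
  2:{ apply PSeries_ext. intro n. unfold PS_scal, PS_decr_1, al, be.
      rewrite scal_R.
      replace (2 * S n)%nat with (S (2 * n + 1)) by lia.
      rewrite poch_S_l. replace (a - 1 + 1) with a by ring.
      assert (0 < poch a (2*n+1)) by (apply poch_pos; lra).
      change ((-1)^(S n)) with (-1 * (-1)^n).
      field. split; lra. }
  rewrite PSeries_scal. field. lra.
Qed.

Lemma ex_al (a w : R) : 0 < a -> ex_pseries (al a) w.
Proof. intros. apply CV_radius_inside. rewrite CV_al by lra. exact I. Qed.
Lemma ex_be (a w : R) : 0 < a -> ex_pseries (be a) w.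
Proof. intros. apply CV_radius_inside. rewrite CV_be by lra. exact I. Qed.
Lemma ex_al1 (a w : R) : 0 < a -> ex_pseries (PS_decr_1 (al a)) w.
Proof. intros. apply CV_radius_inside. rewrite CV_radius_decr_1, CV_al by lra. exact I. Qed.
Lemma ex_be1 (a w : R) : 0 < a -> ex_pseries (PS_decr_1 (be a)) w.
Proof. intros. apply CV_radius_inside. rewrite CV_radius_decr_1, CV_be by lra. exact I. Qed.
Lemma ex_sc (c : R) (u : nat -> R) (w : R) : ex_pseries u w -> ex_pseries (PS_scal c u) w.
Proof. intros. apply ex_pseries_scal; auto. apply Rmult_comm. Qed.

Lemma ode1 (a w : R) : 0 < a ->
  2 * w * PSeries (PS_derive (al a)) w = - w * PSeries (be a) w + (1 - a) * (PSeries (al a) w - 1).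
Proof.
  intros Ha.
  rewrite (PSeries_decr_1 (al a)) by (apply ex_al; auto).
  replace (al a 0) with 1 by (unfold al; simpl; field).
  replace (PSeries (PS_derive (al a)) w) with
    (/2 * PSeries (PS_plus (PS_scal (-1) (be a)) (PS_scal (1-a) (PS_decr_1 (al a)))) w).
  2:{ rewrite <- PSeries_scal. apply PSeries_ext. intro n.
      unfold PS_scal, PS_plus, PS_derive, PS_decr_1.
      repeat change (scal ?x ?y) with (x * y). repeat change (plus ?x ?y) with (x + y).
      unfold al, be. rewrite poch_2S, poch_2p1.
      assert (0 < poch a (2*n)) by (apply poch_pos; lra).
      pose proof (pos_INR n).
      change ((-1)^(S n)) with (-1 * (-1)^n). rewrite S_INR.
      field. lra. }
  rewrite PSeries_plus by (apply ex_sc; auto using ex_be, ex_al1).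
  rewrite !PSeries_scal. field.
Qed.

Lemma ode2 (a w : R) : 0 < a ->
  2 * w * PSeries (PS_derive (be a)) w = PSeries (al a) w - a * PSeries (be a) w.
Proof.
  intros Ha.
  rewrite <- (PSeries_scal a (be a)), <- PSeries_minus by (auto using ex_al, ex_sc, ex_be).
  rewrite (PSeries_decr_1 (PS_minus _ _)) by (apply ex_pseries_minus; auto using ex_al, ex_sc, ex_be).
  replace (PS_minus (al a) (PS_scal a (be a)) 0) with 0.
  2:{ unfold PS_minus, PS_scal, PS_plus, PS_opp.
      repeat change (scal ?x ?y) with (x * y). repeat change (plus ?x ?y) with (x + y).
      repeat change (opp ?x) with (- x).
      unfold al, be. simpl. field. lra. }
  rewrite Rplus_0_l. rewrite (Rmult_comm 2 w), Rmult_assoc. f_equal. rewrite <- PSeries_scal.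
  apply PSeries_ext. intro n.
  unfold PS_minus, PS_scal, PS_plus, PS_opp, PS_derive, PS_decr_1.
  repeat change (scal ?x ?y) with (x * y). repeat change (plus ?x ?y) with (x + y).
  repeat change (opp ?x) with (- x).
  unfold al, be.
  replace (2 * S n + 1)%nat with (S (2 * S n)) by lia.
  change (poch a (S (2 * S n))) with (poch a (2 * S n) * (a + INR (2 * S n))).
  rewrite poch_2S. rewrite mult_INR, S_INR. simpl (INR 2).
  assert (0 < poch a (2*n)) by (apply poch_pos; lra).
  pose proof (pos_INR n).
  change ((-1)^(S n)) with (-1 * (-1)^n).
  field. repeat split; lra.
Qed.

Lemma dA_ok (a w : R) : 0 < a -> derivable_pt_lim (PSeries (al a)) w (PSeries (PS_derive (al a)) w).
Proof. intros. apply is_derive_Reals. apply is_derive_PSeries. rewrite CV_al by lra. exact I. Qed.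
Lemma dB_ok (a w : R) : 0 < a -> derivable_pt_lim (PSeries (be a)) w (PSeries (PS_derive (be a)) w).
Proof. intros. apply is_derive_Reals. apply is_derive_PSeries. rewrite CV_be by lra. exact I. Qed.

Definition RRf (a : R) : R -> R :=
  (PSeries (al a) * PSeries (al a) + id * (PSeries (be a) * PSeries (be a))
  + fct_cte (2 * (1 - a)) * PSeries (be a))%F.

Lemma RRf_eq (a w : R) : RRf a w =
  PSeries (al a) w * PSeries (al a) w + w * (PSeries (be a) w * PSeries (be a) w)
  + 2 * (1 - a) * PSeries (be a) w.
Proof. reflexivity. Qed.

Definition dRR (a w : R) : R :=
  2 * PSeries (al a) w * PSeries (PS_derive (al a)) w
  + (PSeries (be a) w * PSeries (be a) w + w * (2 * PSeries (be a) w * PSeries (PS_derive (be a)) w))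
  + 2 * (1 - a) * PSeries (PS_derive (be a)) w.

Lemma RR_der (a w : R) : 0 < a -> derivable_pt_lim (RRf a) w (dRR a w).
Proof.
  intros Ha. unfold RRf.
  pose proof (dA_ok a w Ha) as HA. pose proof (dB_ok a w Ha) as HB.
  match goal with |- derivable_pt_lim ?f w _ =>
    assert (H := derivable_pt_lim_plus _ _ w _ _
      (derivable_pt_lim_plus _ _ w _ _ (derivable_pt_lim_mult _ _ w _ _ HA HA)
         (derivable_pt_lim_mult _ _ w _ _ (derivable_pt_lim_id w) (derivable_pt_lim_mult _ _ w _ _ HB HB)))
      (derivable_pt_lim_mult _ _ w _ _ (derivable_pt_lim_const (2 * (1 - a)) w) HB)) end.
  match type of H with derivable_pt_lim _ _ ?l => replace (dRR a w) with l; auto end.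
  unfold dRR, fct_cte, mult_fct, id. ring.
Qed.

Lemma dRR_id (a w : R) : 0 < a ->
  a / 2 * RRf a w + w * dRR a w =
  (1 - a / 2) * (PSeries (al a) w * PSeries (al a) w + w * (PSeries (be a) w * PSeries (be a) w)).
Proof.
  intros Ha. rewrite RRf_eq. unfold dRR.
  match goal with |- ?L = _ => replace L with
    (a / 2 * (PSeries (al a) w * PSeries (al a) w + w * (PSeries (be a) w * PSeries (be a) w)
       + 2 * (1 - a) * PSeries (be a) w)
     + PSeries (al a) w * (2 * w * PSeries (PS_derive (al a)) w)
     + w * (PSeries (be a) w * PSeries (be a) w)
     + (w * PSeries (be a) w + (1 - a)) * (2 * w * PSeries (PS_derive (be a)) w)) by ring end.
  rewrite ode1, ode2 by auto. field.
Qed.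

Definition Psi (a : R) : R -> R := ((fun w => Rpower w (a / 2)) * RRf a)%F.

Definition dPsi (a w : R) : R :=
  a / 2 * Rpower w (a / 2 - 1) * RRf a w + Rpower w (a / 2) * dRR a w.

Lemma Psi_der (a w : R) : 0 < a -> 0 < w -> derivable_pt_lim (Psi a) w (dPsi a w).
Proof.
  intros Ha Hw. unfold Psi, dPsi.
  apply (derivable_pt_lim_mult (fun w => Rpower w (a / 2)) (RRf a)).
  - apply (derivable_pt_lim_power w (a/2)); auto.
  - apply RR_der; auto.
Qed.

Lemma dPsi_nonneg (a w : R) : 0 < a < 2 -> 0 < w -> 0 <= dPsi a w.
Proof.
  intros Ha Hw. unfold dPsi.
  replace (Rpower w (a / 2)) with (Rpower w (a / 2 - 1) * w).
  2:{ rewrite <- (Rpower_1 w) at 2 by auto. rewrite <- Rpower_plus. f_equal. ring. }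
  replace (a / 2 * Rpower w (a / 2 - 1) * RRf a w + Rpower w (a / 2 - 1) * w * dRR a w)
    with (Rpower w (a / 2 - 1) * (a / 2 * RRf a w + w * dRR a w)) by ring.
  rewrite dRR_id by lra.
  apply Rmult_le_pos. unfold Rpower; left; apply exp_pos.
  apply Rmult_le_pos. lra.
  apply Rplus_le_le_0_compat. apply Rle_0_sqr.
  apply Rmult_le_pos. lra. apply Rle_0_sqr.
Qed.

Lemma RRf_0 (a : R) : 0 < a -> RRf a 0 = (2 - a) / a.
Proof.
  intros Ha. rewrite RRf_eq, !PSeries_0. unfold al, be. simpl. field. lra.
Qed.

Lemma Rpower_pos (x y : R) : 0 < Rpower x y.
Proof. unfold Rpower; apply exp_pos. Qed.

Lemma RR_pos (a w0 : R) : 0 < a < 2 -> 0 < w0 -> 0 < RRf a w0.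
Proof.
  intros Ha Hw0.
  destruct (Rle_or_lt (RRf a w0) 0) as [Hle|]; [exfalso|auto].
  assert (H0 : 0 < RRf a 0) by (rewrite RRf_0 by lra; apply Rdiv_lt_0_compat; lra).
  assert (Hc : continuity_pt (RRf a) 0).
  { apply derivable_continuous_pt. exists (dRR a 0). apply RR_der; lra. }
  unfold continuity_pt, continue_in, limit1_in, limit_in in Hc. simpl in Hc.
  destruct (Hc (RRf a 0 / 2)) as [alp [Halp Hd]]; [lra|].
  set (w1 := Rmin w0 alp / 2).
  assert (Hm1 : Rmin w0 alp <= w0) by apply Rmin_l.
  assert (Hm2 : Rmin w0 alp <= alp) by apply Rmin_r.
  assert (Hm3 : 0 < Rmin w0 alp) by (apply Rmin_glb_lt; lra).
  assert (Hw1 : 0 < w1 < w0) by (unfold w1; lra).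
  assert (Hw1' : w1 < alp) by (unfold w1; lra).
  specialize (Hd w1). unfold R_dist, D_x, no_cond in Hd.
  assert (Hpos : 0 < RRf a w1).
  { assert (Habs : Rabs (RRf a w1 - RRf a 0) < RRf a 0 / 2).
    { apply Hd. split. split; auto; lra. rewrite Rminus_0_r, Rabs_right; lra. }
    apply Rabs_def2 in Habs. lra. }
  destruct (MVT_cor2 (Psi a) (dPsi a) w1 w0) as [c [Hmvt Hcc]]; [lra| |].
  { intros c Hc'. apply Psi_der; lra. }
  assert (Hd0 : 0 <= dPsi a c) by (apply dPsi_nonneg; lra).
  unfold Psi, mult_fct in Hmvt.
  pose proof (Rpower_pos w0 (a/2)). pose proof (Rpower_pos w1 (a/2)).
  assert (Rpower w0 (a/2) * RRf a w0 <= 0).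
  { rewrite <- (Rmult_0_r (Rpower w0 (a/2))). apply Rmult_le_compat_l; lra. }
  assert (0 < Rpower w1 (a/2) * RRf a w1) by (apply Rmult_lt_0_compat; lra).
  assert (0 <= dPsi a c * (w0 - w1)) by (apply Rmult_le_pos; lra).
  lra.
Qed.

Lemma lommel_eq (m z c : R) : c = m + 5/2 -> -1 < c -> c <> 0 ->
  lommel_s m (1/2) z = Rpower z (m+1) / ((c-2)*(c-1)) * PSeries (al c) (z^2).
Proof.
  intros Hc H1 H2. unfold lommel_s. rewrite <- hyp_al by auto. subst c.
  f_equal.
  - f_equal. field.
  - f_equal; field.
Qed.

Theorem theorem1 (z mu : R) :
  0 < z -> -5/2 < mu < -1/2 -> mu <> -3/2 ->
  (lommel_s mu (1/2) z) ^ 2 - lommel_s (mu - 1) (1/2) z * lommel_s (mu + 1) (1/2) z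
  > 1 / (1/2 - mu) * (lommel_s mu (1/2) z) ^ 2.
Proof.
  intros Hz Hmu Hmu3.
  set (a := mu + 5/2).
  assert (Ha : 0 < a < 2) by (unfold a; lra).
  assert (Ha1 : a <> 1) by (unfold a; lra).
  rewrite (lommel_eq mu z a) by (unfold a; lra).
  rewrite (lommel_eq (mu - 1) z (a - 1)) by (unfold a; lra).
  rewrite (lommel_eq (mu + 1) z (a + 1)) by (unfold a; lra).
  rewrite A_minus1, A_plus1 by lra.
  set (w := z ^ 2).
  assert (Hw : 0 < w) by (unfold w; nra).
  pose proof (RR_pos a w Ha Hw) as HR. rewrite RRf_eq in HR.
  set (A := PSeries (al a) w) in *. set (B := PSeries (be a) w) in *.
  set (X := Rpower z (mu + 1)).
  assert (HX : 0 < X) by apply Rpower_pos.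
  assert (HXX : Rpower z (mu + 1 + 1) = X * X / Rpower z (mu - 1 + 1)).
  { pose proof (Rpower_pos z (mu - 1 + 1)).
    unfold X. rewrite <- Rpower_plus.
    replace (mu + 1 + (mu + 1)) with ((mu - 1 + 1) + (mu + 1 + 1)) by ring.
    rewrite (Rpower_plus (mu - 1 + 1) (mu + 1 + 1) z). field. lra. }
  rewrite HXX.
  assert (HY : 0 < Rpower z (mu - 1 + 1)) by apply Rpower_pos.
  set (Y := Rpower z (mu - 1 + 1)) in *.
  replace mu with (a - 5/2) by (unfold a; ring).
  assert (HP : 0 < A * A + w * (B * B) + (1 - a) * B).
  { assert (0 <= A * A + w * (B * B)).
    { apply Rplus_le_le_0_compat. apply Rle_0_sqr. apply Rmult_le_pos; [lra | apply Rle_0_sqr]. }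
    lra. }
  assert (Hd : 0 < (3 - a) * (2 - a) * ((a - 1) * (a - 1))).
  { apply Rmult_lt_0_compat; [apply Rmult_lt_0_compat; lra|].
    assert (a - 1 <> 0) by lra. pose proof (Rsqr_pos_lt (a - 1) H). unfold Rsqr in H0. lra. }
  match goal with |- ?L > ?Rt =>
    assert (E : L - Rt = X * X * (A * A + w * (B * B) + (1 - a) * B) / ((3 - a) * (2 - a) * ((a - 1) * (a - 1)))) end.
  { field. repeat split; lra. }
  assert (0 < X * X * (A * A + w * (B * B) + (1 - a) * B) / ((3 - a) * (2 - a) * ((a - 1) * (a - 1)))).
  { apply Rdiv_lt_0_compat; auto. apply Rmult_lt_0_compat; auto. apply Rmult_lt_0_compat; auto. }
  lra.
Qed.
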